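(* Let $H$ be a finite-dimensional Hopf algebra over a field $\Bbbk$ and $B$ a right $H$-comodule algebra. Then every projective $B$-module and every injective $B$-module belongs to $\mathcal{N}_H$; consequently every projective or injective $B$-module is isomorphic to the zero object in $\mathcal{C}(B,H)$.
   Context: $H$ has comultiplication $\Delta(h)=\sum h_1\otimes h_2$, counit $\epsilon$, antipode $S$. A right $H$-comodule algebra is a unital $\Bbbk$-algebra $B$ with a unital algebra map $\Delta_B:B\to B\otimes H$, $\Delta_B(b)=\sum b_1\otimes b_2$, that is coassociative and counital. For a $B$-module $M$ and an $H$-module $U$, $M\otimes U$ is a $B$-module via $b\cdot(x\otimes u)=\sum b_1x\otimes b_2u$. A $B$-module morphism is null-homotopic if it factors through a $B$-module of the form $N\otimes H$ ($H$ the left regular module). $\mathcal{N}_H$ denotes the class of $B$-modules whose identity morphism is null-homotopic. $\mathcal{C}(B,H)$ is the quotient of the category of $B$-modules by the ideal of null-homotopic morphisms. *)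

(* Defs.v *)
From HB Require Import structures.
From mathcomp Require Import all_boot all_order all_algebra.
Set Implicit Arguments. Unset Strict Implicit. Unset Printing Implicit Defensive.
Import GRing.Theory.
Local Open Scope ring_scope.

(* A finite-dimensional Hopf algebra H over a field k, of dimension n, given *)
(* by its structure constants in a k-basis e_0, ..., e_(n-1):                *)
(*   e_i e_j       = \sum_p hmul i j p e_p                                   *)
(*   1_H           = \sum_i hunit i e_i                                      *)
(*   Delta(e_p)    = \sum_(i,j) hcomul p i j e_i (x) e_j                     *)
(*   eps(e_i)      = hcounit i                                               *)
(*   S(e_i)        = \sum_j hanti i j e_j                                    *)
Record hopf_data (k : fieldType) (n : nat) := HopfData {
  hmul    : 'I_n -> 'I_n -> 'I_n -> k;
  hunit   : 'I_n -> k;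
  hcomul  : 'I_n -> 'I_n -> 'I_n -> k;
  hcounit : 'I_n -> k;
  hanti   : 'I_n -> 'I_n -> k
}.

Definition is_hopf (k : fieldType) (n : nat) (H : hopf_data k n) : Prop :=
  let m := hmul H in let u := hunit H in let d := hcomul H in
  let eps := hcounit H in let s := hanti H in
  (* associativity: (e_i e_j) e_l = e_i (e_j e_l) *)
  (forall i j l p, \sum_q m i j q * m q l p = \sum_q m j l q * m i q p) /\
  (* unit: 1 e_j = e_j = e_j 1 *)
  (forall j p, \sum_i u i * m i j p = (j == p)%:R) /\
  (forall j p, \sum_i u i * m j i p = (j == p)%:R) /\
  (* coassociativity: (Delta (x) id) Delta = (id (x) Delta) Delta *)
  (forall p a b c, \sum_i d p i c * d i a b = \sum_j d p a j * d j b c) /\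
  (* counit: (eps (x) id) Delta = id = (id (x) eps) Delta *)
  (forall p j, \sum_i d p i j * eps i = (p == j)%:R) /\
  (forall p i, \sum_j d p i j * eps j = (p == i)%:R) /\
  (* Delta is an algebra map *)
  (forall i j a b, \sum_p m i j p * d p a b =
     \sum_a1 \sum_b1 \sum_a2 \sum_b2
        d i a1 b1 * d j a2 b2 * m a1 a2 a * m b1 b2 b) /\
  (forall a b, \sum_p u p * d p a b = u a * u b) /\
  (* eps is an algebra map *)
  (forall i j, \sum_p m i j p * eps p = eps i * eps j) /\
  (\sum_p u p * eps p = 1) /\
  (* antipode: m (S (x) id) Delta = u eps = m (id (x) S) Delta *)
  (forall q p, \sum_i \sum_j \sum_l d q i j * s i l * m l j p = eps q * u p) /\
  (forall q p, \sum_i \sum_j \sum_l d q i j * s j l * m i l p = eps q * u p).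

(* A right H-comodule algebra structure on a k-algebra B.  Since H is free   *)
(* with basis (e_i), B (x) H = (+)_i B (x) e_i, and the coaction is encoded  *)
(* by its coordinates:  Delta_B(b) = \sum_i dB b i (x) e_i.                  *)
Definition is_comodule_alg (k : fieldType) (n : nat) (H : hopf_data k n)
    (B : algType k) (dB : B -> 'I_n -> B) : Prop :=
  (forall (c : k) (a b : B) i, dB (c *: a + b) i = c *: dB a i + dB b i) /\
  (* multiplicativity: Delta_B(ab) = Delta_B(a) Delta_B(b) in B (x) H *)
  (forall (a b : B) p,
     dB (a * b) p = \sum_i \sum_j hmul H i j p *: (dB a i * dB b j)) /\
  (* unitality: Delta_B(1) = 1 (x) 1_H *)
  (forall p, dB 1 p = hunit H p *: 1) /\
  (* coassociativity: (Delta_B (x) id) Delta_B = (id (x) Delta) Delta_B *)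
  (forall (b : B) i j, dB (dB b j) i = \sum_p hcomul H p i j *: dB b p) /\
  (* counitality: (id (x) eps) Delta_B = id *)
  (forall b : B, \sum_i hcounit H i *: dB b i = b).

Record bmod (B : nzRingType) := BMod {
  bcar :> zmodType;
  bact : B -> bcar -> bcar;
  bact_addr : forall b (x y : bcar), bact b (x + y) = bact b x + bact b y;
  bact_addl : forall a b (x : bcar), bact (a + b) x = bact a x + bact b x;
  bact_mul  : forall a b (x : bcar), bact (a * b) x = bact a (bact b x);
  bact_one  : forall x : bcar, bact 1 x = x
}.

Definition is_bhom (B : nzRingType) (M N : bmod B) (f : M -> N) : Prop :=
  (forall x y : M, f (x + y) = f x + f y) /\
  (forall (b : B) (x : M), f (bact b x) = bact b (f x)).

Definition projective_bmod (B : nzRingType) (P : bmod B) : Prop :=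
  forall (M N : bmod B) (g : M -> N) (h : P -> N),
    is_bhom g -> (forall y : N, exists x : M, g x = y) -> is_bhom h ->
    exists h' : P -> M, is_bhom h' /\ (forall x : P, g (h' x) = h x).

Definition injective_bmod (B : nzRingType) (I : bmod B) : Prop :=
  forall (M N : bmod B) (g : M -> N) (h : M -> I),
    is_bhom g -> (forall x y : M, g x = g y -> x = y) -> is_bhom h ->
    exists h' : N -> I, is_bhom h' /\ (forall x : M, h' (g x) = h x).

(* The B-module N (x) H, realised on {ffun 'I_n -> N} (x_p <-> x_p (x) e_p), *)
(* with b . (x (x) u) = \sum b_1 x (x) b_2 u.  For x = \sum_j x_j (x) e_j:   *)
(*   b . x = \sum_(i,j) (dB b i) x_j (x) e_i e_j                             *)
(*         = \sum_p (\sum_(i,j) hmul i j p (dB b i) x_j) (x) e_p.            *)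
(* The k-structure of N is the one induced by B (c . y = (c *: 1_B) . y).    *)
Definition tensH_act (k : fieldType) (n : nat) (H : hopf_data k n)
    (B : algType k) (dB : B -> 'I_n -> B) (N : bmod B)
    (b : B) (x : {ffun 'I_n -> N}) : {ffun 'I_n -> N} :=
  [ffun p => \sum_i \sum_j bact (hmul H i j p *: dB b i) (x j)].

Definition is_bhom_to_tensH (k : fieldType) (n : nat) (H : hopf_data k n)
    (B : algType k) (dB : B -> 'I_n -> B) (M N : bmod B)
    (f : M -> {ffun 'I_n -> N}) : Prop :=
  (forall x y : M, f (x + y) = f x + f y) /\
  (forall (b : B) (x : M), f (bact b x) = tensH_act H dB b (f x)).

Definition is_bhom_from_tensH (k : fieldType) (n : nat) (H : hopf_data k n)
    (B : algType k) (dB : B -> 'I_n -> B) (N M : bmod B)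
    (g : {ffun 'I_n -> N} -> M) : Prop :=
  (forall x y : {ffun 'I_n -> N}, g (x + y) = g x + g y) /\
  (forall (b : B) (x : {ffun 'I_n -> N}), g (tensH_act H dB b x) = bact b (g x)).

Definition null_homotopic (k : fieldType) (n : nat) (H : hopf_data k n)
    (B : algType k) (dB : B -> 'I_n -> B) (M M' : bmod B) (phi : M -> M') : Prop :=
  exists (N : bmod B) (f : M -> {ffun 'I_n -> N}) (g : {ffun 'I_n -> N} -> M'),
    is_bhom_to_tensH H dB f /\ is_bhom_from_tensH H dB g /\
    (forall x : M, g (f x) = phi x).

Definition in_NH (k : fieldType) (n : nat) (H : hopf_data k n)
    (B : algType k) (dB : B -> 'I_n -> B) (M : bmod B) : Prop :=
  null_homotopic H dB (fun x : M => x).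

(* M is isomorphic to the zero object in the quotient category C(B,H):       *)
(* there are morphisms M -> 0 -> M whose composite equals id_M modulo the    *)
(* ideal of null-homotopic morphisms, i.e. id_M - 0 = id_M is null-homotopic *)
(* (the other composite 0 -> M -> 0 is automatically the identity).          *)
Definition iso_zero_in_C (k : fieldType) (n : nat) (H : hopf_data k n)
    (B : algType k) (dB : B -> 'I_n -> B) (M : bmod B) : Prop :=
  null_homotopic H dB (fun x : M => x - (0 : M)).

(* Main.v *)
Set Warnings "-notation-overridden -ambiguous-paths".
Require Import Defs.
From HB Require Import structures.
From mathcomp Require Import all_boot all_order all_algebra.
Set Warnings "-notation-overridden -ambiguous-paths".
Set Implicit Arguments. Unset Strict Implicit. Unset Printing Implicit Defensive.
Import GRing.Theory.
Local Open Scope ring_scope.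


Definition Lc (k : fieldType) n (w G : 'I_n -> k) : k := \sum_r w r * G r.
Definition Dc (k : fieldType) n (d : 'I_n -> 'I_n -> k) (F : 'I_n -> 'I_n -> k) : k :=
  \sum_a Lc (d a) (F a).

Lemma eq_Lc (k : fieldType) n (w G G' : 'I_n -> k) :
  (forall r, G r = G' r) -> Lc w G = Lc w G'.
Proof. by move=> h; apply: eq_bigr => r _; rewrite h. Qed.

Lemma Lc_scale (k : fieldType) n (w G : 'I_n -> k) c :
  Lc w (fun r => c * G r) = c * Lc w G.
Proof. by rewrite /Lc mulr_sumr; apply: eq_bigr => r _; rewrite mulrCA. Qed.

Lemma Lc_scaler (k : fieldType) n (w G : 'I_n -> k) c :
  Lc w (fun r => G r * c) = Lc w G * c.
Proof. by rewrite /Lc mulr_suml; apply: eq_bigr => r _; rewrite mulrA. Qed.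

Lemma Lc_add (k : fieldType) n (w G G' : 'I_n -> k) :
  Lc w (fun r => G r + G' r) = Lc w G + Lc w G'.
Proof. by rewrite /Lc -big_split; apply: eq_bigr => r _; rewrite mulrDr. Qed.

Lemma Lc_sum (k : fieldType) n (I : finType) (w : 'I_n -> k) (F : I -> 'I_n -> k) :
  Lc w (fun r => \sum_x F x r) = \sum_x Lc w (F x).
Proof.
rewrite /Lc (exchange_big); apply: eq_bigr => r _; by rewrite mulr_sumr.
Qed.

Lemma Lc_swap (k : fieldType) n (w v : 'I_n -> k) (F : 'I_n -> 'I_n -> k) :
  Lc w (fun r => Lc v (fun s => F r s)) = Lc v (fun s => Lc w (fun r => F r s)).
Proof.
rewrite /Lc; under eq_bigr do rewrite mulr_sumr.
rewrite exchange_big; apply: eq_bigr => s _; rewrite mulr_sumr.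
by apply: eq_bigr => r _; rewrite mulrCA.
Qed.

Lemma Lc_comp (k : fieldType) n (w : 'I_n -> k) (v : 'I_n -> 'I_n -> k) G :
  Lc w (fun q => Lc (v q) G) = Lc (fun p => Lc w (fun q => v q p)) G.
Proof.
rewrite /Lc; under eq_bigr do rewrite mulr_sumr.
rewrite exchange_big; apply: eq_bigr => p _; rewrite mulr_suml.
by apply: eq_bigr => q _; rewrite mulrA.
Qed.

Lemma Lc_delta (k : fieldType) n (w : 'I_n -> k) i :
  Lc w (fun r => (r == i)%:R) = w i.
Proof.
rewrite /Lc (bigD1 i) //= eqxx mulr1 big1 ?addr0 // => r /negbTE ->.
by rewrite mulr0.
Qed.

Lemma Lc_deltal (k : fieldType) n (G : 'I_n -> k) i :
  Lc (fun r => (r == i)%:R) G = G i.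
Proof.
rewrite /Lc (bigD1 i) //= eqxx mul1r big1 ?addr0 // => r /negbTE ->.
by rewrite mul0r.
Qed.

Lemma Lc_ext (k : fieldType) n (w w' G : 'I_n -> k) :
  (forall r, w r = w' r) -> Lc w G = Lc w' G.
Proof. by move=> h; apply: eq_bigr => r _; rewrite h. Qed.

Lemma eq_Dc (k : fieldType) n (d : 'I_n -> 'I_n -> k) (F F' : 'I_n -> 'I_n -> k) :
  (forall a b, F a b = F' a b) -> Dc d F = Dc d F'.
Proof. by move=> h; apply: eq_bigr => a _; apply: eq_Lc => b; rewrite h. Qed.

Lemma Dc_scale (k : fieldType) n (d : 'I_n -> 'I_n -> k) F c :
  Dc d (fun a b => c * F a b) = c * Dc d F.
Proof. by rewrite /Dc mulr_sumr; apply: eq_bigr => a _; rewrite Lc_scale. Qed.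

Lemma Dc_scaler (k : fieldType) n (d : 'I_n -> 'I_n -> k) F c :
  Dc d (fun a b => F a b * c) = Dc d F * c.
Proof. by rewrite /Dc mulr_suml; apply: eq_bigr => a _; rewrite Lc_scaler. Qed.

Lemma Dc_sum (k : fieldType) n (I : finType) (d : 'I_n -> 'I_n -> k) (F : I -> 'I_n -> 'I_n -> k) :
  Dc d (fun a b => \sum_x F x a b) = \sum_x Dc d (F x).
Proof.
rewrite /Dc; under eq_bigr do rewrite Lc_sum; exact: exchange_big.
Qed.

Lemma Dc_Lc_swap (k : fieldType) n (d : 'I_n -> 'I_n -> k) (w : 'I_n -> k) F :
  Dc d (fun a b => Lc w (F a b)) = Lc w (fun r => Dc d (fun a b => F a b r)).
Proof.
rewrite /Dc; under eq_bigr do rewrite Lc_swap.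
by rewrite /Lc -Lc_sum.
Qed.

Lemma Dc_swap (k : fieldType) n (d e : 'I_n -> 'I_n -> k) F :
  Dc d (fun a b => Dc e (F a b)) = Dc e (fun x y => Dc d (fun a b => F a b x y)).
Proof.
rewrite /Dc; under eq_bigr do rewrite Lc_sum.
rewrite exchange_big; apply: eq_bigr => x _.
under eq_bigr do rewrite Lc_swap.
by rewrite -Lc_sum.
Qed.

Lemma Lc_Dc_swap (k : fieldType) n (d : 'I_n -> 'I_n -> k) (w : 'I_n -> k) F :
  Lc w (fun r => Dc d (F r)) = Dc d (fun a b => Lc w (fun r => F r a b)).
Proof. by rewrite Dc_Lc_swap. Qed.


Lemma Dc_coassoc_form (k : fieldType) n (d : 'I_n -> 'I_n -> 'I_n -> k) p F :
  Dc (d p) (fun i c => Dc (d i) (fun a b => F a b c)) =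
  \sum_a \sum_b \sum_c (\sum_i d p i c * d i a b) * F a b c.
Proof.
rewrite /Dc /Lc.
under eq_bigr do under eq_bigr do rewrite mulr_sumr.
under eq_bigr do rewrite exchange_big /=.
rewrite exchange_big /=; apply: eq_bigr => a _.
under eq_bigr do under eq_bigr do rewrite mulr_sumr.
under eq_bigr do rewrite exchange_big /=.
rewrite exchange_big /=; apply: eq_bigr => b _.
rewrite exchange_big /=; apply: eq_bigr => c _.
rewrite mulr_suml; apply: eq_bigr => i _.
by rewrite mulrA.
Qed.

Lemma Dc_coassoc_form2 (k : fieldType) n (d : 'I_n -> 'I_n -> 'I_n -> k) p F :
  Dc (d p) (fun a j => Dc (d j) (fun b c => F a b c)) =
  \sum_a \sum_b \sum_c (\sum_j d p a j * d j b c) * F a b c.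
Proof.
rewrite /Dc /Lc; apply: eq_bigr => a _.
under eq_bigr do rewrite mulr_sumr.
rewrite exchange_big /=; apply: eq_bigr => b _.
under eq_bigr do rewrite mulr_sumr.
rewrite exchange_big /=; apply: eq_bigr => c _.
rewrite mulr_suml; apply: eq_bigr => j _.
by rewrite mulrA.
Qed.

Lemma Dc_form (k : fieldType) n (d : 'I_n -> 'I_n -> k) F :
  Dc d F = \sum_a \sum_b d a b * F a b.
Proof. by []. Qed.

Lemma Dc_ext (k : fieldType) n (d d' : 'I_n -> 'I_n -> k) F :
  (forall a b, d a b = d' a b) -> Dc d F = Dc d' F.
Proof. by move=> h; apply: eq_bigr => a _; apply: Lc_ext => b; rewrite h. Qed.

Lemma Dc_one (k : fieldType) n (w : 'I_n -> 'I_n -> k) F :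
  Dc (fun _ _ => 1) (fun a b => w a b * F a b) = Dc w F.
Proof. by apply: eq_bigr => a _; apply: eq_bigr => b _; rewrite mul1r. Qed.

Lemma Lc_one (k : fieldType) n (w : 'I_n -> k) F :
  Lc (fun _ => 1) (fun a => w a * F a) = Lc w F.
Proof. by apply: eq_bigr => a _; rewrite mul1r. Qed.

Lemma Dc_comp (k : fieldType) n (e : 'I_n -> 'I_n -> k) (c : 'I_n -> 'I_n -> 'I_n -> 'I_n -> k) F :
  Dc e (fun x y => Dc (c x y) F) = Dc (fun a b => Dc e (fun x y => c x y a b)) F.
Proof.
under eq_Dc do rewrite -Dc_one.
rewrite Dc_swap -[RHS]Dc_one; apply: eq_Dc => a b.
by rewrite Dc_scaler.
Qed.

Lemma Lc_Dc_comp (k : fieldType) n (w : 'I_n -> k) (d : 'I_n -> 'I_n -> 'I_n -> k) F :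
  Lc w (fun p => Dc (d p) F) = Dc (fun a b => Lc w (fun p => d p a b)) F.
Proof.
under eq_Lc do rewrite -Dc_one.
rewrite Lc_Dc_swap -[RHS]Dc_one; apply: eq_Dc => a b.
by rewrite Lc_scaler.
Qed.

Lemma Dc_Lc_comp (k : fieldType) n (d : 'I_n -> 'I_n -> k) (w : 'I_n -> 'I_n -> 'I_n -> k) G :
  Dc d (fun a b => Lc (w a b) G) = Lc (fun r => Dc d (fun a b => w a b r)) G.
Proof.
under eq_Dc do rewrite -Lc_one.
rewrite Dc_Lc_swap -[RHS]Lc_one; apply: eq_Lc => r.
by rewrite Dc_scaler.
Qed.

Lemma Lc_Lc_Dc (k : fieldType) n (w v : 'I_n -> k) F :
  Lc w (fun a => Lc v (fun b => F a b)) = Dc (fun a b => w a * v b) F.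
Proof.
apply: eq_bigr => a _; rewrite -Lc_scale; apply: eq_bigr => b _.
by rewrite mulrCA mulrA.
Qed.



Lemma Lc_scalew (k : fieldType) n (w G : 'I_n -> k) c :
  Lc (fun r => c * w r) G = c * Lc w G.
Proof. by rewrite /Lc mulr_sumr; apply: eq_bigr => r _; rewrite mulrA. Qed.


Ltac hsplit hH :=
  let hA := fresh "hA" in let hU1 := fresh "hU1" in let hU2 := fresh "hU2" in
  let hCA := fresh "hCA" in let hC1 := fresh "hC1" in let hC2 := fresh "hC2" in
  let hDM := fresh "hDM" in let hDU := fresh "hDU" in let hEM := fresh "hEM" in
  let hEU := fresh "hEU" in let hS1 := fresh "hS1" in let hS2 := fresh "hS2" in
  case: hH => hA [hU1 [hU2 [hCA [hC1 [hC2 [hDM [hDU [hEM [hEU [hS1 hS2]]]]]]]]]].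



Lemma H_assoc (k : fieldType) n (H : hopf_data k n) (hH : is_hopf H) i j l G :
  Lc (hmul H i j) (fun q => Lc (hmul H q l) G) = Lc (hmul H j l) (fun q => Lc (hmul H i q) G).
Proof. hsplit hH; rewrite !Lc_comp; apply: Lc_ext => p; exact: hA. Qed.

Lemma H_unitL (k : fieldType) n (H : hopf_data k n) (hH : is_hopf H) j G :
  Lc (hunit H) (fun i => Lc (hmul H i j) G) = G j.
Proof.
hsplit hH; rewrite Lc_comp (@Lc_ext _ _ _ (fun p => (p == j)%:R)) ?Lc_deltal // => p.
by rewrite /Lc hU1 eq_sym.
Qed.

Lemma H_unitR (k : fieldType) n (H : hopf_data k n) (hH : is_hopf H) j G :
  Lc (hunit H) (fun i => Lc (hmul H j i) G) = G j.
Proof.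
hsplit hH; rewrite Lc_comp (@Lc_ext _ _ _ (fun p => (p == j)%:R)) ?Lc_deltal // => p.
by rewrite /Lc hU2 eq_sym.
Qed.

Lemma H_coassoc (k : fieldType) n (H : hopf_data k n) (hH : is_hopf H) p F :
  Dc (hcomul H p) (fun i c => Dc (hcomul H i) (fun a b => F a b c)) =
  Dc (hcomul H p) (fun a j => Dc (hcomul H j) (fun b c => F a b c)).
Proof.
hsplit hH; rewrite Dc_coassoc_form Dc_coassoc_form2.
apply: eq_bigr => a _; apply: eq_bigr => b _; apply: eq_bigr => c _.
by rewrite hCA.
Qed.

Lemma H_counitL (k : fieldType) n (H : hopf_data k n) (hH : is_hopf H) p G :
  Dc (hcomul H p) (fun i j => hcounit H i * G j) = G p.
Proof.
hsplit hH; rewrite /Dc /Lc.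
under eq_bigr do under eq_bigr do rewrite mulrA.
rewrite exchange_big /=.
under eq_bigr do rewrite -mulr_suml hC1.
rewrite (bigD1 p) //= eqxx mul1r big1 ?addr0 // => j /negbTE.
by rewrite eq_sym => ->; rewrite mul0r.
Qed.

Lemma H_counitR (k : fieldType) n (H : hopf_data k n) (hH : is_hopf H) p G :
  Dc (hcomul H p) (fun i j => G i * hcounit H j) = G p.
Proof.
hsplit hH; rewrite /Dc /Lc.
under eq_bigr do under eq_bigr do rewrite mulrCA.
under eq_bigr do rewrite -mulr_sumr hC2.
rewrite (bigD1 p) //= eqxx mulr1 big1 ?addr0 // => j /negbTE.
by rewrite eq_sym => ->; rewrite mulr0.
Qed.

Lemma H_Dmul (k : fieldType) n (H : hopf_data k n) (hH : is_hopf H) i j F :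
  Lc (hmul H i j) (fun p => Dc (hcomul H p) F) =
  Dc (hcomul H i) (fun a1 b1 => Dc (hcomul H j) (fun a2 b2 =>
     Lc (hmul H a1 a2) (fun a => Lc (hmul H b1 b2) (fun b => F a b)))).
Proof.
hsplit hH; rewrite Lc_Dc_comp.
under [RHS]eq_Dc do under eq_Dc do rewrite Lc_Lc_Dc.
under [RHS]eq_Dc do rewrite Dc_comp.
rewrite Dc_comp; apply: Dc_ext => a b.
rewrite /Lc hDM /Dc /Lc; apply: eq_bigr => a1 _; apply: eq_bigr => b1 _.
rewrite mulr_sumr; apply: eq_bigr => a2 _; rewrite mulr_sumr; apply: eq_bigr => b2 _.
by rewrite !mulrA.
Qed.

Lemma H_Dunit (k : fieldType) n (H : hopf_data k n) (hH : is_hopf H) F :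
  Lc (hunit H) (fun p => Dc (hcomul H p) F) = Lc (hunit H) (fun a => Lc (hunit H) (fun b => F a b)).
Proof.
hsplit hH; rewrite Lc_Dc_comp Lc_Lc_Dc; apply: Dc_ext => a b; exact: hDU.
Qed.

Lemma H_emul (k : fieldType) n (H : hopf_data k n) (hH : is_hopf H) i j :
  Lc (hmul H i j) (hcounit H) = hcounit H i * hcounit H j.
Proof. by hsplit hH; apply: hEM. Qed.

Lemma H_eunit (k : fieldType) n (H : hopf_data k n) (hH : is_hopf H) :
  Lc (hunit H) (hcounit H) = 1.
Proof. by hsplit hH; apply: hEU. Qed.

Lemma H_antiL (k : fieldType) n (H : hopf_data k n) (hH : is_hopf H) q G :
  Dc (hcomul H q) (fun i j => Lc (hanti H i) (fun l => Lc (hmul H l j) G)) =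
  hcounit H q * Lc (hunit H) G.
Proof.
hsplit hH.
under eq_Dc do rewrite Lc_comp.
rewrite Dc_Lc_comp -Lc_scalew; apply: Lc_ext => p.
rewrite -hS1 /Dc /Lc; apply: eq_bigr => i _; apply: eq_bigr => j _.
by rewrite mulr_sumr; apply: eq_bigr => l _; rewrite !mulrA.
Qed.

Lemma H_antiR (k : fieldType) n (H : hopf_data k n) (hH : is_hopf H) q G :
  Dc (hcomul H q) (fun i j => Lc (hanti H j) (fun l => Lc (hmul H i l) G)) =
  hcounit H q * Lc (hunit H) G.
Proof.
hsplit hH.
under eq_Dc do rewrite Lc_comp.
rewrite Dc_Lc_comp -Lc_scalew; apply: Lc_ext => p.
rewrite -hS2 /Dc /Lc; apply: eq_bigr => i _; apply: eq_bigr => j _.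
by rewrite mulr_sumr; apply: eq_bigr => l _; rewrite !mulrA.
Qed.


Definition conv (k : fieldType) n (H : hopf_data k n) (f g : 'I_n -> 'I_n -> 'I_n -> k) a b r :=
  Dc (hcomul H a) (fun a1 a2 => Dc (hcomul H b) (fun b1 b2 =>
    Lc (f a1 b1) (fun x => Lc (g a2 b2) (fun y => hmul H x y r)))).

Lemma conv_cps (k : fieldType) n (H : hopf_data k n) f g a b G :
  Lc (conv H f g a b) G = Dc (hcomul H a) (fun a1 a2 => Dc (hcomul H b) (fun b1 b2 =>
    Lc (f a1 b1) (fun x => Lc (g a2 b2) (fun y => Lc (hmul H x y) G)))).
Proof.
rewrite /conv -Dc_Lc_comp; apply: eq_Dc => a1 a2.
rewrite -Dc_Lc_comp; apply: eq_Dc => b1 b2.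
rewrite -Lc_comp; apply: eq_Lc => x.
by rewrite -Lc_comp.
Qed.

Lemma conv_assoc (k : fieldType) n (H : hopf_data k n) (hH : is_hopf H) f g h a b G :
  Lc (conv H (conv H f g) h a b) G = Lc (conv H f (conv H g h) a b) G.
Proof.
rewrite !conv_cps.
under eq_Dc do under eq_Dc do rewrite conv_cps.
under [RHS]eq_Dc do under eq_Dc do under eq_Lc do rewrite conv_cps.
under eq_Dc do rewrite Dc_swap.
rewrite (H_coassoc hH a (fun a1 a2 a3 => Dc (hcomul H b) (fun b1 b2 => Dc (hcomul H b1)
  (fun b11 b12 => Lc (f a1 b11) (fun x => Lc (g a2 b12) (fun y => Lc (hmul H x y)
     (fun z => Lc (h a3 b2) (fun w => Lc (hmul H z w) G)))))))).
under eq_Dc => a0 j do under eq_Dc => b0 c do rewrite (H_coassoc hH b (fun b1 b2 b3 =>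
  Lc (f a0 b1) (fun x => Lc (g b0 b2) (fun y => Lc (hmul H x y)
     (fun z => Lc (h c b3) (fun w => Lc (hmul H z w) G)))))).
under [RHS]eq_Dc => a0 a' do under eq_Dc => b0 b' do rewrite Lc_Dc_swap.
under [RHS]eq_Dc => a0 a' do under eq_Dc => b0 b' do under eq_Dc => a1 a2 do rewrite Lc_Dc_swap.
under [RHS]eq_Dc => a0 a' do rewrite Dc_swap.
apply: eq_Dc => a0 a'; apply: eq_Dc => a1 a2; apply: eq_Dc => b0 b'; apply: eq_Dc => b1 b2.
apply: eq_Lc => x; apply: eq_Lc => y.
rewrite Lc_swap; apply: eq_Lc => w.
by rewrite H_assoc.
Qed.

Lemma rot3 (k : fieldType) (x y z : k) : x * y * z = z * y * x.
Proof. by rewrite mulrC [x * y]mulrC mulrA. Qed.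

Definition Eh (k : fieldType) n (H : hopf_data k n) (a b r : 'I_n) :=
  hcounit H a * hcounit H b * hunit H r.
Definition muh (k : fieldType) n (H : hopf_data k n) (a b r : 'I_n) := hmul H a b r.
Definition nuh (k : fieldType) n (H : hopf_data k n) (a b r : 'I_n) :=
  Lc (hanti H b) (fun x => Lc (hanti H a) (fun y => hmul H x y r)).
Definition rhoh (k : fieldType) n (H : hopf_data k n) (a b r : 'I_n) :=
  Lc (hmul H a b) (fun p => hanti H p r).

Lemma Eh_cps (k : fieldType) n (H : hopf_data k n) a b G :
  Lc (Eh H a b) G = hcounit H a * hcounit H b * Lc (hunit H) G.
Proof. by rewrite /Eh Lc_scalew. Qed.

Lemma nuh_cps (k : fieldType) n (H : hopf_data k n) a b G :
  Lc (nuh H a b) G = Lc (hanti H b) (fun x => Lc (hanti H a) (fun y => Lc (hmul H x y) G)).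
Proof. by rewrite /nuh -Lc_comp; apply: eq_Lc => x; rewrite -Lc_comp. Qed.

Lemma rhoh_cps (k : fieldType) n (H : hopf_data k n) a b G :
  Lc (rhoh H a b) G = Lc (hmul H a b) (fun p => Lc (hanti H p) G).
Proof. by rewrite /rhoh -Lc_comp. Qed.

Lemma conv_congr (k : fieldType) n (H : hopf_data k n) f f' g g' :
  (forall a b G, Lc (f a b) G = Lc (f' a b) G) ->
  (forall a b G, Lc (g a b) G = Lc (g' a b) G) ->
  forall a b G, Lc (conv H f g a b) G = Lc (conv H f' g' a b) G.
Proof.
move=> hf hg a b G; rewrite !conv_cps; apply: eq_Dc => a1 a2; apply: eq_Dc => b1 b2.
rewrite hf; apply: eq_Lc => x; by rewrite hg.
Qed.

Lemma conv_E_r (k : fieldType) n (H : hopf_data k n) (hH : is_hopf H) f a b G :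
  Lc (conv H f (Eh H) a b) G = Lc (f a b) G.
Proof.
rewrite conv_cps.
under eq_Dc do under eq_Dc do under eq_Lc do rewrite Eh_cps (H_unitR hH).
under eq_Dc do under eq_Dc do rewrite Lc_scale mulrC mulrA.
under eq_Dc => a1 a2 do rewrite (H_counitR hH b (fun b1 => Lc (f a1 b1) G * hcounit H a2)).
by rewrite (H_counitR hH a (fun a1 => Lc (f a1 b) G)).
Qed.

Lemma conv_E_l (k : fieldType) n (H : hopf_data k n) (hH : is_hopf H) g a b G :
  Lc (conv H (Eh H) g a b) G = Lc (g a b) G.
Proof.
rewrite conv_cps.
under eq_Dc do under eq_Dc do rewrite Eh_cps Lc_swap.
under eq_Dc do under eq_Dc do under eq_Lc do rewrite (H_unitL hH).
under eq_Dc do under eq_Dc do rewrite -mulrA mulrCA.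
under eq_Dc => a1 a2 do rewrite (H_counitL hH b (fun b2 => hcounit H a1 * Lc (g a2 b2) G)).
by rewrite (H_counitL hH a (fun a2 => Lc (g a2 b) G)).
Qed.

Lemma conv_mu_nu (k : fieldType) n (H : hopf_data k n) (hH : is_hopf H) a b G :
  Lc (conv H (muh H) (nuh H) a b) G = Lc (Eh H a b) G.
Proof.
rewrite conv_cps Eh_cps /muh.
under eq_Dc do under eq_Dc do under eq_Lc do rewrite nuh_cps.
under eq_Dc do under eq_Dc do under eq_Lc do under eq_Lc do under eq_Lc do rewrite -(H_assoc hH).
under eq_Dc do under eq_Dc do under eq_Lc do rewrite Lc_swap.
under eq_Dc do under eq_Dc do rewrite Lc_swap.
under eq_Dc do under eq_Dc do under eq_Lc do rewrite Lc_swap.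
under eq_Dc do under eq_Dc do under eq_Lc do under eq_Lc do rewrite (H_assoc hH).
under eq_Dc do rewrite Dc_Lc_swap.
under eq_Dc do under eq_Lc do rewrite (H_antiR hH) (H_unitR hH).
under eq_Dc do rewrite Lc_scale.
by rewrite Dc_scale (H_antiR hH) mulrA [hcounit H b * _]mulrC.
Qed.

Lemma conv_rho_mu (k : fieldType) n (H : hopf_data k n) (hH : is_hopf H) a b G :
  Lc (conv H (rhoh H) (muh H) a b) G = Lc (Eh H a b) G.
Proof.
rewrite conv_cps Eh_cps /muh.
under eq_Dc do under eq_Dc do rewrite rhoh_cps.
under eq_Dc do under eq_Dc do under eq_Lc do rewrite Lc_swap.
rewrite -(H_Dmul hH a b (fun p y => Lc (hanti H p) (fun x => Lc (hmul H x y) G))).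
under eq_Lc do rewrite (H_antiL hH).
by rewrite Lc_scaler (H_emul hH).
Qed.

Lemma H_antimul (k : fieldType) n (H : hopf_data k n) (hH : is_hopf H) a b G :
  Lc (hmul H a b) (fun p => Lc (hanti H p) G) =
  Lc (hanti H b) (fun x => Lc (hanti H a) (fun y => Lc (hmul H x y) G)).
Proof.
rewrite -rhoh_cps -nuh_cps -(conv_E_r hH).
rewrite (@conv_congr _ _ H (rhoh H) (rhoh H) (Eh H) (conv H (muh H) (nuh H))) //; last first.
  by move=> ? ? ?; rewrite conv_mu_nu.
rewrite -conv_assoc //.
rewrite (@conv_congr _ _ H (conv H (rhoh H) (muh H)) (Eh H) (nuh H) (nuh H)) //.
  by rewrite conv_E_l.
by move=> ? ? ?; rewrite conv_rho_mu.
Qed.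


Lemma H_S1 (k : fieldType) n (H : hopf_data k n) (hH : is_hopf H) G :
  Lc (hunit H) (fun p => Lc (hanti H p) G) = Lc (hunit H) G.
Proof.
rewrite -[RHS]mul1r -(H_eunit hH) -Lc_scaler.
under [RHS]eq_Lc do rewrite -(H_antiL hH).
rewrite (H_Dunit hH); apply: eq_Lc => i.
by rewrite Lc_swap; apply: eq_Lc => l; rewrite (H_unitR hH).
Qed.

Lemma H_SAR (k : fieldType) n (H : hopf_data k n) (hH : is_hopf H) h G :
  Dc (hcomul H h) (fun h1 h2 => Lc (hanti H h2) (fun b => Lc (hanti H b) (fun x =>
     Lc (hanti H h1) (fun y => Lc (hmul H x y) G)))) = hcounit H h * Lc (hunit H) G.
Proof.
rewrite -(H_S1 hH) -(H_antiR hH); apply: eq_Dc => i j; apply: eq_Lc => l.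
by rewrite (H_antimul hH).
Qed.

Lemma H_SAL (k : fieldType) n (H : hopf_data k n) (hH : is_hopf H) h G :
  Dc (hcomul H h) (fun h1 h2 => Lc (hanti H h1) (fun l => Lc (hanti H h2) (fun x =>
     Lc (hanti H l) (fun y => Lc (hmul H x y) G)))) = hcounit H h * Lc (hunit H) G.
Proof.
rewrite -(H_S1 hH) -(H_antiL hH); apply: eq_Dc => i j; apply: eq_Lc => l.
by rewrite (H_antimul hH).
Qed.

Definition Aq (k : fieldType) n (H : hopf_data k n) k2 i c :=
  Lc (hanti H k2) (fun l => hmul H l c i).
Definition T2 (k : fieldType) n (H : hopf_data k n) a q i :=
  Lc (hanti H a) (fun b => Lc (hanti H b) (fun l => hmul H l q i)).
Definition tq (k : fieldType) n (H : hopf_data k n) q x :=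
  \sum_i Lc (hcomul H i x) (fun a => T2 H a q i).

Lemma inner_CI (k : fieldType) n (H : hopf_data k n) (hH : is_hopf H) k1 k2 (Phi : 'I_n -> 'I_n -> k) :
  \sum_i Lc (hmul H k1 i) (fun w => \sum_c Aq H k2 i c * Phi w c) =
  \sum_c \sum_w Phi w c * Lc (hanti H k2) (fun l => Lc (hmul H k1 l) (fun p => hmul H p c w)).
Proof.
have hA : forall i j l p, \sum_q hmul H i j q * hmul H q l p = \sum_q hmul H j l q * hmul H i q p.
  by case: hH.
rewrite /Lc /Aq /Lc.
transitivity (\sum_c \sum_w \sum_i \sum_l
   hanti H k2 l * hmul H l c i * hmul H k1 i w * Phi w c).
  under eq_bigr do under eq_bigr do rewrite mulr_sumr.
  under eq_bigr do rewrite exchange_big /=.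
  rewrite exchange_big /=; apply: eq_bigr => c _.
  rewrite exchange_big /=; apply: eq_bigr => w _; apply: eq_bigr => i _.
  rewrite mulr_suml mulr_sumr; apply: eq_bigr => l _.
  by rewrite mulrA [hmul H k1 i w * _]mulrC.
apply: eq_bigr => c _; apply: eq_bigr => w _.
rewrite [RHS]mulrC mulr_suml.
under [RHS]eq_bigr => l _ do rewrite hA.
rewrite exchange_big /=; apply: eq_bigr => l _.
rewrite mulr_sumr mulr_suml; apply: eq_bigr => i _.
by rewrite !mulrA.
Qed.

Lemma H_u_m (k : fieldType) n (H : hopf_data k n) (hH : is_hopf H) c w :
  Lc (hunit H) (fun p => hmul H p c w) = (c == w)%:R.
Proof. by case: hH => _ [hU1 _]; apply: hU1. Qed.

Lemma sum_delta2 (k : fieldType) n (F : 'I_n -> 'I_n -> k) :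
  \sum_c \sum_w F w c * (c == w)%:R = \sum_c F c c.
Proof.
apply: eq_bigr => c _; rewrite (bigD1 c) //= eqxx mulr1 big1 ?addr0 // => w.
by rewrite eq_sym => /negbTE ->; rewrite mulr0.
Qed.

Lemma CI (k : fieldType) n (H : hopf_data k n) (hH : is_hopf H) kk (Phi : 'I_n -> 'I_n -> k) :
  \sum_i Dc (hcomul H kk) (fun k1 k2 => Lc (hmul H k1 i) (fun w => \sum_c Aq H k2 i c * Phi w c)) =
  hcounit H kk * \sum_i Phi i i.
Proof.
rewrite -Dc_sum.
under eq_Dc do rewrite (inner_CI hH).
rewrite Dc_sum; under eq_bigr do rewrite Dc_sum.
under eq_bigr do under eq_bigr do rewrite Dc_scale (H_antiR hH) (H_u_m hH) mulrCA.
rewrite -sum_delta2 mulr_sumr; apply: eq_bigr => c _.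
by rewrite mulr_sumr.
Qed.

Lemma E_form (k : fieldType) n (H : hopf_data k n) (hH : is_hopf H) k2 i a q :
  \sum_c Aq H k2 i c * T2 H a q c =
  Lc (hanti H a) (fun b => Lc (hanti H b) (fun l => Lc (hanti H k2) (fun l' =>
     Lc (hmul H l' l) (fun c => hmul H c q i)))).
Proof.
rewrite [LHS](_ : _ = Lc (fun c => T2 H a q c) (fun c => Aq H k2 i c)); last first.
  by rewrite /Lc; apply: eq_bigr => c _; rewrite mulrC.
rewrite /T2 -Lc_comp; apply: eq_Lc => b; rewrite -Lc_comp; apply: eq_Lc => l.
rewrite /Aq Lc_swap; apply: eq_Lc => l'.
rewrite -[LHS](@eq_Lc _ _ _ (fun c => Lc (hmul H l' c) (fun r => (r == i)%:R))); last first.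
  by move=> c; rewrite Lc_delta.
rewrite -(H_assoc hH); apply: eq_Lc => c; by rewrite Lc_delta.
Qed.

Lemma KEY (k : fieldType) n (H : hopf_data k n) (hH : is_hopf H) j i2 q i :
  Dc (hcomul H j) (fun k12 k2 => Lc (hmul H k12 i2) (fun a =>
     Lc (hanti H a) (fun b => Lc (hanti H b) (fun l => Lc (hanti H k2) (fun l' =>
     Lc (hmul H l' l) (fun c => hmul H c q i)))))) = hcounit H j * T2 H i2 q i.
Proof.
under eq_Dc do rewrite (H_antimul hH).
under eq_Dc do under eq_Lc do under eq_Lc do rewrite (H_antimul hH).
under eq_Dc do under eq_Lc do under eq_Lc do under eq_Lc do under eq_Lc do
  rewrite Lc_swap.
under eq_Dc do under eq_Lc do under eq_Lc do under eq_Lc do under eq_Lc do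
  under eq_Lc do rewrite -(H_assoc hH).
under eq_Dc do under eq_Lc do under eq_Lc do rewrite Lc_swap.
under eq_Dc do under eq_Lc do rewrite Lc_swap.
under eq_Dc do under eq_Lc do under eq_Lc do under eq_Lc do rewrite Lc_swap.
rewrite Dc_Lc_swap; under eq_Lc do rewrite Dc_Lc_swap.
under eq_Lc do under eq_Lc do rewrite (H_SAL hH) (H_unitL hH).
rewrite /T2 -Lc_scale; apply: eq_Lc => x; by rewrite Lc_scale.
Qed.

Lemma Lc_Dc_delta (k : fieldType) n (d : 'I_n -> 'I_n -> k) r F :
  Dc d (fun x a => (x == r)%:R * F a) = Lc (d r) F.
Proof.
rewrite /Dc; under eq_bigr do rewrite Lc_scale.
rewrite (bigD1 r) //= eqxx mul1r big1 ?addr0 // => x /negbTE ->.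
by rewrite mul0r.
Qed.

Lemma H_Dmul_r (k : fieldType) n (H : hopf_data k n) (hH : is_hopf H) k1 i r F :
  Lc (hmul H k1 i) (fun w => Lc (hcomul H w r) F) =
  Dc (hcomul H k1) (fun k11 k12 => Dc (hcomul H i) (fun i1 i2 =>
    hmul H k11 i1 r * Lc (hmul H k12 i2) F)).
Proof.
under eq_Lc do rewrite -Lc_Dc_delta.
rewrite (H_Dmul hH); apply: eq_Dc => k11 k12; apply: eq_Dc => i1 i2.
under eq_Lc do rewrite Lc_scale.
by rewrite Lc_scaler Lc_delta.
Qed.

Lemma sum_Lc (k : fieldType) n (w : 'I_n -> k) (X : 'I_n -> k) (Y : 'I_n -> 'I_n -> k) :
  \sum_c X c * Lc w (Y c) = Lc w (fun a => \sum_c X c * Y c a).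
Proof. under eq_bigr do rewrite -Lc_scale; by rewrite -Lc_sum. Qed.

Lemma per_i (k : fieldType) n (H : hopf_data k n) (hH : is_hopf H) kk q r i :
  Dc (hcomul H kk) (fun k1 k2 => Lc (hmul H k1 i) (fun w =>
     \sum_c Aq H k2 i c * Lc (hcomul H w r) (fun a => T2 H a q c))) =
  \sum_x hmul H kk x r * Lc (hcomul H i x) (fun a => T2 H a q i).
Proof.
under eq_Dc do under eq_Lc do rewrite sum_Lc.
under eq_Dc do under eq_Lc do under eq_Lc do rewrite (E_form hH).
under eq_Dc do rewrite (H_Dmul_r hH).
rewrite (H_coassoc hH kk (fun k11 k12 k2 => Dc (hcomul H i) (fun i1 i2 =>
    hmul H k11 i1 r * Lc (hmul H k12 i2) (fun a =>
     Lc (hanti H a) (fun b => Lc (hanti H b) (fun l => Lc (hanti H k2) (fun l' =>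
     Lc (hmul H l' l) (fun c => hmul H c q i)))))))).
under eq_Dc do rewrite Dc_swap.
under eq_Dc do under eq_Dc do rewrite Dc_scale (KEY hH) mulrCA.
under eq_Dc do rewrite Dc_scale mulrC.
rewrite (H_counitR hH kk (fun k11 => Dc (hcomul H i) (fun i1 i2 => hmul H k11 i1 r * T2 H i2 q i))).
by rewrite /Dc; apply: eq_bigr => x _; rewrite Lc_scale.
Qed.

Lemma tq_integral (k : fieldType) n (H : hopf_data k n) (hH : is_hopf H) kk q r :
  \sum_x hmul H kk x r * tq H q x = hcounit H kk * tq H q r.
Proof.
rewrite /tq -(CI hH kk (fun w c => Lc (hcomul H w r) (fun a => T2 H a q c))).
under [RHS]eq_bigr do rewrite (per_i hH).
rewrite exchange_big /=; apply: eq_bigr => x _.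
by rewrite mulr_sumr.
Qed.

Lemma NZ_form (k : fieldType) n (H : hopf_data k n) (hH : is_hopf H) a' b i c :
  \sum_q T2 H a' q i * Aq H b q c =
  Lc (hanti H a') (fun b' => Lc (hanti H b') (fun l' => Lc (hanti H b) (fun l =>
     Lc (hmul H l' l) (fun p => hmul H p c i)))).
Proof.
rewrite (_ : \sum_q _ = Lc (fun q => T2 H a' q i) (fun q => Aq H b q c)) //.
rewrite /T2 -Lc_comp; apply: eq_Lc => b'; rewrite -Lc_comp; apply: eq_Lc => l'.
rewrite /Aq Lc_swap; apply: eq_Lc => l.
case: hH => hA _; rewrite /Lc [RHS]hA; apply: eq_bigr => q _; exact: mulrC.
Qed.

Lemma tq_nz (k : fieldType) n (H : hopf_data k n) (hH : is_hopf H) a c :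
  \sum_q \sum_x tq H q x * Lc (hcomul H x a) (fun b => Aq H b q c) = (c == a)%:R.
Proof.
rewrite /tq.
transitivity (\sum_i \sum_x Lc (hcomul H i x) (fun a' => Lc (hcomul H x a) (fun b =>
   \sum_q T2 H a' q i * Aq H b q c))).
  symmetry.
  under eq_bigr do under eq_bigr do under eq_Lc do rewrite Lc_sum.
  under eq_bigr do under eq_bigr do rewrite Lc_sum.
  under eq_bigr do under eq_bigr do under eq_bigr do under eq_Lc do rewrite Lc_scale.
  under eq_bigr do under eq_bigr do under eq_bigr do rewrite Lc_scaler.
  under [RHS]eq_bigr do under eq_bigr do rewrite mulr_suml.
  rewrite exchange_big /=.
  under eq_bigr do rewrite exchange_big /=.
  rewrite exchange_big /=.
  apply: eq_bigr => q _; rewrite exchange_big /=; by [].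
under eq_bigr do under eq_bigr do under eq_Lc do under eq_Lc do rewrite (NZ_form hH).
transitivity (\sum_i Dc (hcomul H i) (fun x a' => Dc (hcomul H x) (fun a0 b =>
   (a0 == a)%:R * Lc (hanti H a') (fun b' => Lc (hanti H b') (fun l' => Lc (hanti H b) (fun l =>
     Lc (hmul H l' l) (fun p => hmul H p c i))))))).
  by apply: eq_bigr => i _; apply: eq_bigr => x _; apply: eq_Lc => a'; rewrite Lc_Dc_delta.
under eq_bigr => i _ do rewrite (H_coassoc hH i (fun a0 b a' => (a0 == a)%:R * Lc (hanti H a') (fun b' => Lc (hanti H b') (fun l' => Lc (hanti H b) (fun l =>
     Lc (hmul H l' l) (fun p => hmul H p c i)))))).
under eq_bigr => i _ do under eq_Dc do rewrite Dc_scale (H_SAR hH) (H_u_m hH) mulrCA mulrC.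
under eq_bigr => i _ do rewrite (H_counitR hH i (fun a0 => (a0 == a)%:R * (c == i)%:R)).
rewrite (bigD1 a) //= eqxx mul1r big1 ?addr0 // => i /negbTE ->.
by rewrite mul0r.
Qed.


Lemma bact0l (B : nzRingType) (M : bmod B) (x : M) : bact 0 x = 0.
Proof. by apply: (@addrI _ (bact 0 x)); rewrite -bact_addl !addr0. Qed.

Lemma bact0r (B : nzRingType) (M : bmod B) b : bact b (0 : M) = 0.
Proof. by apply: (@addrI _ (bact b 0)); rewrite -bact_addr !addr0. Qed.

Lemma bact_suml (B : nzRingType) (M : bmod B) (I : finType) (f : I -> B) (x : M) :
  bact (\sum_i f i) x = \sum_i bact (f i) x.
Proof.
apply: (big_morph (fun b => bact b x)); first by move=> a b; rewrite bact_addl.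
exact: bact0l.
Qed.

Lemma bact_sumr (B : nzRingType) (M : bmod B) (I : finType) b (f : I -> M) :
  bact b (\sum_i f i) = \sum_i bact b (f i).
Proof.
apply: (big_morph (fun y : M => bact b y)); first by move=> x y; rewrite bact_addr.
exact: bact0r.
Qed.

Lemma comod_add (k : fieldType) n (H : hopf_data k n) (B : algType k) (dB : B -> 'I_n -> B)
  (hB : is_comodule_alg H dB) a b i : dB (a + b) i = dB a i + dB b i.
Proof. by case: hB => hl _; have := hl 1 a b i; rewrite !scale1r. Qed.

Lemma tens_addr (k : fieldType) n (H : hopf_data k n) (B : algType k) (dB : B -> 'I_n -> B)
  (N : bmod B) b (x y : {ffun 'I_n -> N}) :
  tensH_act H dB b (x + y) = tensH_act H dB b x + tensH_act H dB b y.
Proof.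
apply/ffunP => p; rewrite !ffunE -big_split; apply: eq_bigr => i _.
rewrite -big_split; apply: eq_bigr => j _; by rewrite ffunE bact_addr.
Qed.

Lemma tens_addl (k : fieldType) n (H : hopf_data k n) (B : algType k) (dB : B -> 'I_n -> B)
  (hB : is_comodule_alg H dB) (N : bmod B) a b (x : {ffun 'I_n -> N}) :
  tensH_act H dB (a + b) x = tensH_act H dB a x + tensH_act H dB b x.
Proof.
apply/ffunP => p; rewrite !ffunE -big_split; apply: eq_bigr => i _.
rewrite -big_split; apply: eq_bigr => j _; by rewrite (comod_add hB) scalerDr bact_addl.
Qed.

Lemma tens_one (k : fieldType) n (H : hopf_data k n) (hH : is_hopf H) (B : algType k) (dB : B -> 'I_n -> B)
  (hB : is_comodule_alg H dB) (N : bmod B) (x : {ffun 'I_n -> N}) :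
  tensH_act H dB 1 x = x.
Proof.
have hU1 : forall j p, \sum_i hunit H i * hmul H i j p = (j == p)%:R by case: hH => _ [].
case: hB => _ [_ [h1 _]].
apply/ffunP => p; rewrite !ffunE exchange_big /=.
under eq_bigr do under eq_bigr do rewrite h1 scalerA mulrC.
under eq_bigr do rewrite -bact_suml -scaler_suml hU1.
rewrite (bigD1 p) //= eqxx scale1r bact_one big1 ?addr0 // => j /negbTE ->.
by rewrite scale0r bact0l.
Qed.


Lemma comod_mul_sum (k : fieldType) n (H : hopf_data k n) (B : algType k) (dB : B -> 'I_n -> B)
  (hB : is_comodule_alg H dB) (a b : B) j p :
  \sum_i hmul H i j p *: dB (a * b) i =
  \sum_k0 \sum_l (\sum_q hmul H k0 l q * hmul H q j p) *: (dB a k0 * dB b l).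
Proof.
case: hB => _ [hm _].
transitivity (\sum_i hmul H i j p *: \sum_i0 \sum_j0 hmul H i0 j0 i *: (dB a i0 * dB b j0)).
  by apply: eq_bigr => i _; rewrite hm.
under eq_bigr do rewrite scaler_sumr.
under eq_bigr do under eq_bigr do rewrite scaler_sumr.
under eq_bigr do under eq_bigr do under eq_bigr do rewrite scalerA.
rewrite exchange_big /=; apply: eq_bigr => kk _.
rewrite exchange_big /=; apply: eq_bigr => l _.
rewrite scaler_suml; apply: eq_bigr => q _; by rewrite mulrC.
Qed.

Lemma sc_mul (k : fieldType) (B : algType k) (c d : k) (x y : B) :
  (c *: x) * (d *: y) = (c * d) *: (x * y).
Proof. by rewrite -scalerAl -scalerAr scalerA. Qed.

Lemma tens_mul (k : fieldType) n (H : hopf_data k n) (hH : is_hopf H) (B : algType k) (dB : B -> 'I_n -> B)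
  (hB : is_comodule_alg H dB) (N : bmod B) a b (x : {ffun 'I_n -> N}) :
  tensH_act H dB (a * b) x = tensH_act H dB a (tensH_act H dB b x).
Proof.
have hA : forall i j l p, \sum_q hmul H i j q * hmul H q l p = \sum_q hmul H j l q * hmul H i q p.
  by case: hH.
apply/ffunP => p; rewrite !ffunE.
transitivity (\sum_j bact (\sum_k \sum_l (\sum_q hmul H k l q * hmul H q j p) *: (dB a k * dB b l)) (x j)).
  rewrite exchange_big /=; apply: eq_bigr => j _; rewrite -bact_suml; congr bact.
  exact: comod_mul_sum.
symmetry.
under eq_bigr do under eq_bigr do rewrite !ffunE.
under eq_bigr do under eq_bigr do rewrite bact_sumr.
under eq_bigr do under eq_bigr do under eq_bigr do rewrite bact_sumr.
under eq_bigr do under eq_bigr do under eq_bigr do under eq_bigr do rewrite -bact_mul.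
under eq_bigr do under eq_bigr do rewrite exchange_big /=.
under eq_bigr do rewrite exchange_big /=.
rewrite exchange_big /=; apply: eq_bigr => j _.
under eq_bigr do under eq_bigr do rewrite -bact_suml.
under eq_bigr do rewrite -bact_suml.
rewrite -bact_suml; congr bact.
apply: eq_bigr => kk _.
transitivity (\sum_i \sum_i0 (hmul H kk i p * hmul H i0 j i) *: (dB a kk * dB b i0)).
  apply: eq_bigr => i _; apply: eq_bigr => i0 _; exact: sc_mul.
rewrite exchange_big /=; apply: eq_bigr => l _.
rewrite -scaler_suml hA; congr (_ *: _); apply: eq_bigr => q _; by rewrite mulrC.
Qed.


Definition tensH_bmod (k : fieldType) n (H : hopf_data k n) (hH : is_hopf H) (B : algType k)
  (dB : B -> 'I_n -> B) (hB : is_comodule_alg H dB) (N : bmod B) : bmod B :=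
  @BMod B {ffun 'I_n -> N} (@tensH_act k n H B dB N)
    (fun b x y => @tens_addr k n H B dB N b x y)
    (fun a b x => @tens_addl k n H B dB hB N a b x)
    (fun a b x => @tens_mul k n H hH B dB hB N a b x)
    (fun x => @tens_one k n H hH B dB hB N x).

Lemma sc1_mul (k : fieldType) (B : algType k) (c : k) (y : B) :
  (c *: 1) * y = c *: y.
Proof. by rewrite -scalerAl mul1r. Qed.

Lemma mul_sc1 (k : fieldType) (B : algType k) (c : k) (y : B) :
  y * (c *: 1) = c *: y.
Proof. by rewrite -scalerAr mulr1. Qed.

Lemma tensE (k : fieldType) n (H : hopf_data k n) (B : algType k)
  (dB : B -> 'I_n -> B) (N : bmod B) b (x : {ffun 'I_n -> N}) p :
  tensH_act H dB b x p = \sum_i \sum_j bact (hmul H i j p *: dB b i) (x j).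
Proof. by rewrite ffunE. Qed.

Lemma pi_hom (k : fieldType) n (H : hopf_data k n) (hH : is_hopf H) (B : algType k)
  (dB : B -> 'I_n -> B) (hB : is_comodule_alg H dB) (N : bmod B) b (x : {ffun 'I_n -> N}) :
  \sum_p bact (hcounit H p *: (1 : B)) (tensH_act H dB b x p) =
  bact b (\sum_p bact (hcounit H p *: (1 : B)) (x p)).
Proof.
have hEM : forall i j, \sum_p hmul H i j p * hcounit H p = hcounit H i * hcounit H j.
  by case: hH => _ [_ [_ [_ [_ [_ [_ [_ [hEM _]]]]]]]].
have hc : forall b : B, \sum_i hcounit H i *: dB b i = b.
  by case: hB => _ [_ [_ [_ hc]]].
rewrite bact_sumr.
under [RHS]eq_bigr do rewrite -bact_mul.
transitivity (\sum_p \sum_i \sum_j bact ((hcounit H p *: (1 : B)) * (hmul H i j p *: dB b i)) (x j)).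
  apply: eq_bigr => p _; rewrite ffunE bact_sumr; apply: eq_bigr => i _.
  rewrite bact_sumr; apply: eq_bigr => j _; by rewrite bact_mul.
rewrite exchange_big /=; under eq_bigr do rewrite exchange_big /=.
rewrite exchange_big /=; apply: eq_bigr => j _.
under eq_bigr do rewrite -bact_suml.
rewrite -bact_suml; congr bact.
transitivity (\sum_i (\sum_p hmul H i j p * hcounit H p) *: dB b i).
  apply: eq_bigr => i _; rewrite scaler_suml; apply: eq_bigr => p _.
  rewrite mulrC -scalerA; exact: sc1_mul.
under eq_bigr do rewrite hEM mulrC -scalerA.
rewrite -scaler_sumr hc; symmetry; exact: mul_sc1.
Qed.

Lemma pi_surj (k : fieldType) n (H : hopf_data k n) (hH : is_hopf H) (B : algType k)
  (N : bmod B) (y : N) :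
  \sum_p bact (hcounit H p *: (1 : B)) ([ffun p => bact (hunit H p *: (1 : B)) y] p) = y.
Proof.
have hEU : \sum_p hunit H p * hcounit H p = 1 by case: hH => _ [_ [_ [_ [_ [_ [_ [_ [_ [hEU _]]]]]]]]].
transitivity (\sum_p bact ((hunit H p * hcounit H p) *: (1 : B)) y).
  apply: eq_bigr => p _; rewrite ffunE -bact_mul; congr bact.
  by rewrite sc1_mul scalerA mulrC.
by rewrite -bact_suml -scaler_suml hEU scale1r bact_one.
Qed.

Lemma j_hom (k : fieldType) n (H : hopf_data k n) (B : algType k)
  (dB : B -> 'I_n -> B) (hB : is_comodule_alg H dB) (N : bmod B) (t : 'I_n -> k)
  (ht : forall kk r, \sum_x hmul H kk x r * t x = hcounit H kk * t r) b (y : N) :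
  tensH_act H dB b [ffun p => bact (t p *: (1 : B)) y] =
  [ffun p => bact (t p *: (1 : B)) (bact b y)].
Proof.
have hc : forall b : B, \sum_i hcounit H i *: dB b i = b.
  by case: hB => _ [_ [_ [_ hc]]].
apply/ffunP => p; rewrite !ffunE -bact_mul sc1_mul.
transitivity (\sum_i \sum_j bact ((hmul H i j p * t j) *: dB b i) y).
  apply: eq_bigr => i _; apply: eq_bigr => j _; rewrite ffunE -bact_mul.
  by rewrite mul_sc1 scalerA mulrC.
under eq_bigr do rewrite -bact_suml -scaler_suml.
rewrite -bact_suml; congr bact.
transitivity (\sum_i t p *: (hcounit H i *: dB b i)).
  by apply: eq_bigr => i _; rewrite ht scalerA mulrC.
by rewrite -scaler_sumr hc.
Qed.

Lemma integral_exists (k : fieldType) n (H : hopf_data k n) (hH : is_hopf H) :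
  exists t : 'I_n -> k, (forall kk r, \sum_x hmul H kk x r * t x = hcounit H kk * t r) /\
    exists p, t p != 0.
Proof.
have [a0 _] : exists a : 'I_n, True.
  move: H hH; case: n => [|m] H hH; last by exists ord0.
  move: (H_eunit hH); rewrite /Lc big_ord0 => /eqP; by rewrite eq_sym oner_eq0.
case: (boolP [exists q, exists x, tq H q x != 0]).
  move=> /existsP [q /existsP [x hx]]; exists (tq H q); split; last by exists x.
  by move=> kk r; apply: tq_integral.
move=> hno; exfalso.
have h0 : forall q x, tq H q x = 0.
  move=> q x; apply/eqP; apply: contraNT hno => hx.
  by apply/existsP; exists q; apply/existsP; exists x.
move: (tq_nz hH a0 a0); rewrite eqxx big1 => [/eqP|q _]; first by rewrite eq_sym oner_eq0.
by rewrite big1 // => x _; rewrite h0 mul0r.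
Qed.


Lemma proj_NH (k : fieldType) n (H : hopf_data k n) (B : algType k) (dB : B -> 'I_n -> B)
  (hH : is_hopf H) (hB : is_comodule_alg H dB) (P : bmod B) :
  projective_bmod P -> null_homotopic H dB (fun x : P => x).
Proof.
move=> hP.
pose NH := tensH_bmod hH hB P.
pose pi := fun x : NH => \sum_p bact (hcounit H p *: (1 : B)) ((x : {ffun 'I_n -> P}) p) : P.
have pib : is_bhom (pi : NH -> P).
  split.
    move=> x y; rewrite /pi -big_split; apply: eq_bigr => p _.
    by rewrite ffunE bact_addr.
  move=> b x; exact: pi_hom.
have pis : forall y : P, exists x : NH, pi x = y.
  move=> y; exists ([ffun p => bact (hunit H p *: (1 : B)) y] : NH).
  exact: pi_surj.
have idb : is_bhom (fun x : P => x) by [].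
have [h' [hh' hsec]] := hP NH P pi (fun x => x) pib pis idb.
exists P, h', pi; split; first exact: hh'.
by split; first exact: pib.
Qed.

Lemma inj_NH (k : fieldType) n (H : hopf_data k n) (B : algType k) (dB : B -> 'I_n -> B)
  (hH : is_hopf H) (hB : is_comodule_alg H dB) (I : bmod B) :
  injective_bmod I -> null_homotopic H dB (fun x : I => x).
Proof.
move=> hI.
have [t [ht [p0 hp0]]] := integral_exists hH.
pose NH := tensH_bmod hH hB I.
pose j := fun y : I => ([ffun p => bact (t p *: (1 : B)) y] : NH).
have jb : is_bhom j.
  split.
    move=> x y; apply/ffunP => p; by rewrite !ffunE bact_addr.
  move=> b y; rewrite /j /=; symmetry; exact: j_hom.
have jinj : forall x y : I, j x = j y -> x = y.
  move=> x y /ffunP /(_ p0); rewrite !ffunE => e.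
  have := congr1 (bact ((t p0)^-1 *: (1 : B))) e.
  by rewrite -!bact_mul sc1_mul scalerA mulVf // scale1r !bact_one.
have idb : is_bhom (fun x : I => x) by [].
have [h' [hh' hsec]] := hI I NH j (fun x => x) jb jinj idb.
exists I, j, h'; split; first exact: jb.
by split; first exact: hh'.
Qed.

Theorem corollary2p8 (k : fieldType) (n : nat) (H : hopf_data k n)
    (B : algType k) (dB : B -> 'I_n -> B) :
  is_hopf H -> is_comodule_alg H dB ->
  (forall P : bmod B, projective_bmod P -> in_NH H dB P /\ iso_zero_in_C H dB P) /\
  (forall I : bmod B, injective_bmod I -> in_NH H dB I /\ iso_zero_in_C H dB I).
Proof.
move=> hH hB; split.
  move=> P hP; have [N [f [g [hf [hg hgf]]]]] := proj_NH hH hB hP.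
  split; first by exists N, f, g.
  by exists N, f, g; split => //; split => // x; rewrite hgf subr0.
move=> I hI; have [N [f [g [hf [hg hgf]]]]] := inj_NH hH hB hI.
split; first by exists N, f, g.
by exists N, f, g; split => //; split => // x; rewrite hgf subr0.
Qed.
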